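(* Let $G=(V,E)$ be a directed graph with real edge weights and no cycle of negative or zero weight, and let $x_1,y_1,x_2,y_2\in V$. Then $$F_{\mathrm{disj}}(x_1,y_1,x_2,y_2)=F(x_1,y_1)F(x_2,y_2)-\sum_{v\in V\setminus(\{x_1,y_1\}\cap\{x_2,y_2\})}D_v(x_1,y_1,x_2,y_2).$$
   Context: Introduce an indeterminate $z_e$ per edge; polynomials have coefficients in a field of characteristic two. For a simple path $P$, $f(P)$ is the product of $z_e$ over its edges ($1$ for a single vertex). $\Pi(x,y)$ is the set of shortest $x$–$y$ paths and $F(x,y)=\sum_{P\in\Pi(x,y)}f(P)$. Paths from $x_1$ to $y_1$ and from $x_2$ to $y_2$ are internally vertex-disjoint if they share no vertex outside $\{x_1,y_1\}\cap\{x_2,y_2\}$. $P[x,y]$ denotes the subpath from $x$ to $y$. $F_{\mathrm{disj}}(x_1,y_1,x_2,y_2)=\sum f(P_1)f(P_2)$ over internally vertex-disjoint pairs $(P_1,P_2)\in\Pi(x_1,y_1)\times\Pi(x_2,y_2)$. $D_v(x_1,y_1,x_2,y_2)=\sum f(P_1)f(P_2)$ over pairs $(P_1,P_2)\in\Pi(x_1,y_1)\times\Pi(x_2,y_2)$ such that $v\in V(P_1)\cap V(P_2)$ and $P_1[x_1,v]$ is internally vertex-disjoint both from $P_2[x_2,v]$ and from $P_2[v,y_2]$. *)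

(* Defs.v *)
From HB Require Import structures.
From mathcomp Require Import all_boot all_order all_algebra.
From mathcomp Require Import mpoly.
Set Implicit Arguments. Unset Strict Implicit. Unset Printing Implicit Defensive.
Import Order.TTheory GRing.Theory Num.Theory.
Local Open Scope ring_scope.

(* A path (or walk) is
   represented by its non-empty sequence of vertices. *)

Section Graph.
Variables (V : finType) (R : realFieldType) (e : rel V) (w : V -> V -> R).

Definition arcs (p : seq V) : seq (V * V) := zip p (behead p).

Definition pweight (p : seq V) : R := \sum_(a <- arcs p) w a.1 a.2.

Definition spath (x y : V) (p : seq V) : bool :=
  [&& head x p == x, last x p == y, p != [::], path e x (behead p) & uniq p].

(* all vertex sequences of length at most #|V|; they contain every simple path *)
Definition allseq : seq (seq V) :=
  flatten [seq [seq tval t | t : k.-tuple V] | k <- iota 0 #|V|.+1].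

Definition shortest (x y : V) (p : seq V) : bool :=
  spath x y p && all (fun q => spath x y q ==> (pweight p <= pweight q)) allseq.

Definition Pi (x y : V) : seq (seq V) := [seq p <- allseq | shortest x y p].

Definition cweight (c : seq V) : R := \sum_(a <- zip c (rot 1 c)) w a.1 a.2.

Definition no_nonpos_cycle : Prop :=
  forall c : seq V, c != [::] -> uniq c -> cycle e c -> 0 < cweight c.

Definition int_disj (x1 y1 x2 y2 : V) (P1 P2 : seq V) : bool :=
  all (fun v => (v \in P2) ==> (v \in [set x1; y1] :&: [set x2; y2])) P1.

Definition subpath_to (P : seq V) (v : V) : seq V := take (index v P).+1 P.
Definition subpath_from (P : seq V) (v : V) : seq V := drop (index v P) P.

Variable (F : fieldType).
Local Notation N := #|{: V * V}|.

Definition zvar (u v : V) : {mpoly F[N]} := 'X_(enum_rank (u, v)).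

Definition fP (P : seq V) : {mpoly F[N]} := \prod_(a <- arcs P) zvar a.1 a.2.

Definition Fsum (x y : V) : {mpoly F[N]} := \sum_(P <- Pi x y) fP P.

Definition Fdisj (x1 y1 x2 y2 : V) : {mpoly F[N]} :=
  \sum_(P1 <- Pi x1 y1) \sum_(P2 <- Pi x2 y2 | int_disj x1 y1 x2 y2 P1 P2)
     fP P1 * fP P2.

Definition Dv (v x1 y1 x2 y2 : V) : {mpoly F[N]} :=
  \sum_(P1 <- Pi x1 y1) \sum_(P2 <- Pi x2 y2 |
        [&& v \in P1, v \in P2,
            int_disj x1 v x2 v (subpath_to P1 v) (subpath_to P2 v) &
            int_disj x1 v v y2 (subpath_to P1 v) (subpath_from P2 v)])
     fP P1 * fP P2.

End Graph.

(* Main.v *)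
Require Import Defs.
From HB Require Import structures.
From mathcomp Require Import all_boot all_order all_algebra.
From mathcomp Require Import mpoly.
Import Order.TTheory GRing.Theory Num.Theory.
Local Open Scope ring_scope.

Lemma in_drop_uniq (V : eqType) (x : V) s i :
  uniq s -> x \in s -> (x \in drop i s) = (i <= index x s)%N.
Proof.
move=> us xs.
have : uniq (take i s ++ drop i s) by rewrite cat_take_drop.
rewrite cat_uniq => /and3P[_ hd _].
have : x \in take i s ++ drop i s by rewrite cat_take_drop.
rewrite mem_cat.
rewrite leqNgt -(in_take i xs).
case: (boolP (x \in take i s)) => ht /=; last by [].
move=> _; apply/negP => hdr; move/negP: hd; apply; apply/hasP; by exists x.
Qed.

Lemma Pi_facts (V : finType) (R : realFieldType) (e : rel V) (w : V -> V -> R)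
  x y P : P \in Pi e w x y -> exists t, [/\ P = x :: t, last x t = y & uniq (x :: t)].
Proof.
rewrite mem_filter => /andP[/andP[/and5P[hh hl hn _ hu] _] _].
case: P hh hl hn hu => [//|a t] /= /eqP -> /eqP hl _ hu.
by exists t.
Qed.

Section Comb.
Set Implicit Arguments.
Variables (V : finType) (x1 y1 x2 y2 : V) (t1 t2 : seq V).
Hypotheses (u1 : uniq (x1::t1)) (l1 : last x1 t1 = y1)
           (u2 : uniq (x2::t2)) (l2 : last x2 t2 = y2).

Definition cond (v : V) (P1 P2 : seq V) :=
  [&& v \in P1, v \in P2,
            int_disj x1 v x2 v (subpath_to P1 v) (subpath_to P2 v) &
            int_disj x1 v v y2 (subpath_to P1 v) (subpath_from P2 v)].

Let S := [set x1; y1] :&: [set x2; y2].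

Lemma cond_before v u : cond v (x1::t1) (x2::t2) ->
  u \in x1::t1 -> u \in x2::t2 -> (index u (x1::t1) < index v (x1::t1))%N -> u \in S.
Proof.
rewrite /cond; case/and4P => v1 v2 /allP h1 /allP h2 u1' u2' lt.
have ut : u \in subpath_to (x1::t1) v by rewrite /subpath_to in_take // ltnS ltnW.
have nuv : u != v by apply/eqP => E; rewrite E ltnn in lt.
case: (leqP (index u (x2::t2)) (index v (x2::t2))) => c.
- have := h1 u ut; rewrite /subpath_to in_take // ltnS c /= !inE (negbTE nuv) orbF.
  by rewrite orbF => /andP[/eqP -> ->]; rewrite eqxx.
- have := h2 u ut; rewrite /subpath_from in_drop_uniq // (ltnW c) /= !inE (negbTE nuv) /=.
  by rewrite ?orbF => /andP[/eqP -> ->]; rewrite eqxx ?orbT.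
Qed.

Lemma cond_notS v : v \notin S -> cond v (x1::t1) (x2::t2) ->
  ~~ int_disj x1 y1 x2 y2 (x1::t1) (x2::t2).
Proof.
rewrite /cond; move=> vS /and4P[v1 v2 _ _]; apply/negP => /allP /(_ v v1); rewrite v2 /=.
by move=> H; rewrite H in vS.
Qed.

Lemma exists_cond : ~~ int_disj x1 y1 x2 y2 (x1::t1) (x2::t2) ->
  exists v, (v \notin S) && cond v (x1::t1) (x2::t2).
Proof.
rewrite /cond; set P1 := x1 :: t1; set P2 := x2 :: t2.
move=> nd.
pose p := fun u => (u \in P2) && (u \notin S).
have hp : has p P1.
  move: nd; rewrite /int_disj -has_predC => /hasP[u uP /= H].
  apply/(@hasP _ p P1); exists u => //; rewrite /p; move: H; rewrite negb_imply.
  by case/andP => -> ->.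
set i := find p P1.
have iP : (i < size P1)%N by rewrite -has_find.
set v := nth x1 P1 i.
have pv : p v := nth_find x1 hp.
have vP1 : v \in P1 by apply: mem_nth.
have iv : index v P1 = i by apply: index_uniq.
case/andP: pv => vP2 vS.
exists v; apply/andP; split; first by [].
have iy1 : index y1 P1 = size t1 by rewrite -l1 index_last.
have ix1 : index x1 P1 = 0%N by rewrite /= eqxx.
have iy2 : index y2 P2 = size t2 by rewrite -l2 index_last.
have ix2 : index x2 P2 = 0%N by rewrite /= eqxx.
have iv2 : (index v P2 < size P2)%N by rewrite index_mem.
have before : forall u, u \in subpath_to P1 v -> u \in P2 -> u != v ->
   (u = x1) /\ (u \in S).
  move=> u ut uP2 nuv.
  have uP1 : u \in P1 by apply: mem_take ut.
  move: ut; rewrite /subpath_to in_take // ltnS leq_eqVlt => /orP[/eqP E|lt].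
    by case/eqP: nuv; rewrite -(nth_index x1 uP1) E iv.
  rewrite iv in lt.
  have := before_find x1 lt; rewrite /p (nth_index x1 uP1) uP2 /= => /negbFE uS.
  split=> //.
  move: uS; rewrite !inE => /andP[/orP[/eqP //|/eqP E] _].
  have : (index u P1 < i)%N := lt.
  have : (i < size P1)%N := iP.
  by rewrite E iy1 /= ltnS => a b; have := leq_trans b a; rewrite ltnn.
apply/and4P; split; [by [] | by [] | | ]; apply/allP => u ut /=; apply/implyP => uin.
- case: (eqVneq u v) => [->|nuv]; first by rewrite !inE !eqxx !orbT.
  have uP2 : u \in P2 by apply: mem_take uin.
  case: (before u ut uP2 nuv) => E uS; subst u.
  rewrite !inE eqxx /=.
  move: uS; rewrite !inE => /andP[_ /orP[->//|/eqP E]].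
  move: uin; rewrite /subpath_to in_take // ltnS E iy2 => le.
  have : index v P2 = size t2 by apply/eqP; rewrite eqn_leq le -ltnS iv2.
  rewrite -iy2 => H.
  have Hv : v = y2 by rewrite -(nth_index x1 vP2) H nth_index // -E.
  by rewrite Hv -E eqxx in nuv.
- case: (eqVneq u v) => [->|nuv]; first by rewrite !inE !eqxx !orbT.
  have uP2 : u \in P2 by apply: mem_drop uin.
  case: (before u ut uP2 nuv) => E uS; subst u.
  rewrite !inE eqxx /=.
  move: uS; rewrite !inE => /andP[_ /orP[/eqP E|->]]; last by rewrite orbT.
  move: uin; rewrite /subpath_from in_drop_uniq // E ix2 leqn0 => /eqP H.
  have := nth_index x1 vP2; rewrite H /= => H'.
  by rewrite E H' eqxx in nuv.
Qed.

Lemma sum_cond (M : nmodType) (X : M) :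
  \sum_(v in ~: S) (if cond v (x1::t1) (x2::t2) then X else 0) =
  if int_disj x1 y1 x2 y2 (x1::t1) (x2::t2) then 0 else X.
Proof.
case: (boolP (int_disj _ _ _ _ _ _)) => hd.
  apply: big1 => v; rewrite inE => vS.
  case c: (cond _ _ _) => //.
  by have := @cond_notS v vS c; rewrite hd.
case: (exists_cond hd) => v /andP[vS c].
rewrite (bigD1 v); last by rewrite in_setC.
case: ifP => [_|]; last by rewrite c.
rewrite big1; [exact: addr0| move=> v' /andP[]; rewrite inE => vS' ne].
case c': (cond _ _ _) => //; exfalso.
have vP : v \in x1::t1 by case/and4P: c.
have vP' : v' \in x1::t1 by case/and4P: c'.
have vP2 : v \in x2::t2 by case/and4P: c.
have vP2' : v' \in x2::t2 by case/and4P: c'.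
case: (ltngtP (index v (x1::t1)) (index v' (x1::t1))) => l.
- by have := @cond_before v' v c' vP vP2 l; rewrite (negbTE vS).
- by have := @cond_before v v' c vP' vP2' l; rewrite (negbTE vS').
- by move/eqP: ne; apply; rewrite -(nth_index x1 vP) -(nth_index x1 vP') l.

Qed.

End Comb.

Lemma sum_split (M : nmodType) (I : Type) (r : seq I) (F1 F2 : I -> M) :
  \sum_(i <- r) F1 i + \sum_(i <- r) F2 i = \sum_(i <- r) (F1 i + F2 i).
Proof. by rewrite big_split. Qed.

Theorem lemma9 (V : finType) (R : realFieldType) (e : rel V) (w : V -> V -> R)
  (F : fieldType) (char2 : 2%N \in [pchar F])
  (hcyc : no_nonpos_cycle e w) (x1 y1 x2 y2 : V) :
  Fdisj e w F x1 y1 x2 y2 =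
    Fsum e w F x1 y1 * Fsum e w F x2 y2
    - \sum_(v in ~: ([set x1; y1] :&: [set x2; y2])) Dv e w F v x1 y1 x2 y2.
Proof.
rewrite /Fsum big_distrl /=.
under eq_bigr do rewrite big_distrr /=.
apply/eqP; rewrite eq_sym subr_eq; apply/eqP.
have HD : \sum_(v in ~: ([set x1; y1] :&: [set x2; y2])) Dv e w F v x1 y1 x2 y2 =
  \sum_(P1 <- Pi e w x1 y1) \sum_(P2 <- Pi e w x2 y2)
     \sum_(v in ~: ([set x1; y1] :&: [set x2; y2]))
        (if @cond V x1 x2 y2 v P1 P2 then fP F P1 * fP F P2 else 0).
  rewrite /Dv.
  under eq_bigr do under eq_bigr do rewrite big_mkcond.
  rewrite exchange_big; apply: eq_bigr => P1 _; rewrite exchange_big //.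
rewrite HD /Fdisj.
have SS := @sum_split _ _ (Pi e w x1 y1) (fun P1 => \sum_(P2 <- Pi e w x2 y2 | int_disj x1 y1 x2 y2 P1 P2) fP F P1 * fP F P2) (fun P1 => \sum_(P2 <- Pi e w x2 y2) \sum_(v in ~: ([set x1; y1] :&: [set x2; y2])) (if @cond V x1 x2 y2 v P1 P2 then fP F P1 * fP F P2 else 0)).
rewrite /= in SS. rewrite SS.
rewrite !big_seq; apply: eq_bigr => P1 h1.
rewrite (big_mkcond (fun P2 => int_disj x1 y1 x2 y2 P1 P2)).
have SS2 := (@sum_split _ _ (Pi e w x2 y2) (fun P2 => if int_disj x1 y1 x2 y2 P1 P2 then fP F P1 * fP F P2 else 0) (fun P2 => \sum_(v in ~: ([set x1; y1] :&: [set x2; y2])) (if @cond V x1 x2 y2 v P1 P2 then fP F P1 * fP F P2 else 0))).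
rewrite /= in SS2; rewrite SS2.
rewrite !big_seq; apply: eq_bigr => P2 h2 /=.
case: (@Pi_facts _ _ _ _ _ _ _ h1) => t1 [E1 l1 u1]; case: (@Pi_facts _ _ _ _ _ _ _ h2) => t2 [E2 l2 u2].
subst P1 P2.
rewrite (@sum_cond V x1 y1 x2 y2 t1 t2 u1 l1 u2 l2).
by case: (int_disj _ _ _ _ _ _); rewrite ?addr0 ?add0r.
Qed.
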